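(* Let $R$ be a skew field and let $n \geqslant 3$ be an integer. Let $P$ be an $n$-gon whose vertex set is numbered by $\{1,\ldots,n\}$ so that $1<2<\cdots<n<1$ or $1>2>\cdots>n>1$ in the cyclic order of the vertices. Let $c : \operatorname{diag} P \to R^*$ be a frieze, and let $M_c$ be the $n \times n$ matrix whose $(i,k)$ entry is $c_{ik}$ for $i \neq k$ and $0$ for $i=k$. Then the Dieudonné determinant of $M_c$ is \[ \det M_c = \overline{-(-2)^{n-2}} \cdot \overline{c_{12}c_{23}\cdots c_{n-1,n}c_{n1}}. \]
   Context: A polygon $P$ is a finite set $V$ of at least three vertices with a cyclic ordering; $\operatorname{diag} P$ is the set of ordered pairs $(i,k)$ of distinct vertices (called diagonals), and we write $c_{ik}$ for $c(i,k)$. Diagonals $(i,k)$ and $(j,\ell)$ cross if $i,j,k,\ell$ are pairwise distinct and $i<j<k<\ell$ or $i<\ell<k<j$ in the cyclic order. For a ring $R$ with group of units $R^*$, a map $c:\operatorname{diag}P\to R^*$ is a frieze if (i) for all pairwise distinct vertices $i,j,k$ the triangle relation $c_{ij}c_{kj}^{-1}c_{ki}=c_{ik}c_{jk}^{-1}c_{ji}$ holds, and (ii) whenever $(i,k)$ and $(j,\ell)$ cross, the exchange relation $c_{ik}=c_{ij}c_{\ell j}^{-1}c_{\ell k}+c_{i\ell}c_{j\ell}^{-1}c_{jk}$ holds. For a skew field $R$, the Dieudonné determinant takes values in $(R^*/[R^*,R^*])\,\dot\cup\,\{0\}$; for $x \in R^*$, $\overline{x}$ denotes the coset of $x$ in the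 abelianisation $R^*/[R^*,R^*]$, and $\overline{0}=0$. *)

(* Defs.v *)
From HB Require Import structures.
From mathcomp Require Import all_boot all_order all_algebra.
Set Implicit Arguments. Unset Strict Implicit. Unset Printing Implicit Defensive.
Import Order.TTheory GRing.Theory Num.Theory.
Local Open Scope ring_scope.

Section Defs.
Variable R : unitRingType.

Definition skew_field : Prop := forall x : R, x != 0 -> x \is a GRing.unit.

Inductive comm_sub : R -> Prop :=
| comm_sub1 : comm_sub 1
| comm_subM : forall a b x, a \is a GRing.unit -> b \is a GRing.unit ->
    comm_sub x -> comm_sub (x * (a * b * a^-1 * b^-1)).

(* x and y have the same image in (R^*/[R^*,R^*]) \cup {0} *)
Definition ab_eq (x y : R) : Prop :=
  (x = 0 /\ y = 0) \/
  [/\ x \is a GRing.unit, y \is a GRing.unit & comm_sub (x * y^-1)].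

Variable n : nat.

Definition mx_invertible (M : 'M[R]_n) : Prop :=
  exists N : 'M[R]_n, M *m N = 1%:M /\ N *m M = 1%:M.

Definition transvection (i j : 'I_n) (a : R) : 'M[R]_n :=
  1%:M + a *: delta_mx i j.

Inductive elementary_mx : 'M[R]_n -> Prop :=
| elem1 : elementary_mx 1%:M
| elemM : forall E i j a, i != j -> elementary_mx E ->
    elementary_mx (E *m transvection i j a).

Definition diag_last (d : R) : 'M[R]_n :=
  \matrix_(i, j) (if i == j then (if (i : nat) == n.-1 then d else 1) else 0).

(* "the Dieudonne determinant of M equals the class of r":
   det M = 0 if M is singular; otherwise M = E * diag(1,...,1,d) with E in
   the elementary subgroup, and det M is the class of d (well defined by
   Dieudonne's theorem). *)
Definition dieudonne_det_is (M : 'M[R]_n) (r : R) : Prop :=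
  (~ mx_invertible M /\ r = 0) \/
  (exists (E : 'M[R]_n) (d : R),
      [/\ elementary_mx E, M = E *m diag_last d & ab_eq d r]).

(* strict cyclic order on the vertices 'I_n = {0,...,n-1} *)
Definition cyc3 (a b c : 'I_n) : bool :=
  [|| (a < b < c)%N, (b < c < a)%N | (c < a < b)%N].

Definition cyc4 (a b c d : 'I_n) : bool := cyc3 a b c && cyc3 a c d.

Definition crossing (i k j l : 'I_n) : bool := cyc4 i j k l || cyc4 i l k j.

Definition is_frieze (c : 'I_n -> 'I_n -> R) : Prop :=
  [/\ (forall i k, i != k -> c i k \is a GRing.unit),
      (forall i j k, i != j -> j != k -> i != k ->
          c i j * (c k j)^-1 * c k i = c i k * (c j k)^-1 * c j i)
    & (forall i k j l, crossing i k j l ->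
          c i k = c i j * (c l j)^-1 * c l k + c i l * (c j l)^-1 * c j k)].

Definition frieze_mx (c : 'I_n -> 'I_n -> R) : 'M[R]_n :=
  \matrix_(i, k) (if i == k then 0 else c i k).

End Defs.

(* Main.v *)
Require Import Defs.
From HB Require Import structures.
From mathcomp Require Import all_boot all_order all_algebra zify.
Import GRing.Theory.
Local Open Scope ring_scope.
Set Implicit Arguments. Unset Strict Implicit.


Lemma elem_mul (R : unitRingType) n (E F : 'M[R]_n) :
  elementary_mx E -> elementary_mx F -> elementary_mx (E *m F).
Proof.
move=> hE; elim=> [|F' i j a ij _ IH]; first by rewrite mulmx1.
by rewrite mulmxA; apply: elemM.
Qed.

Lemma transvE (R : unitRingType) n (i j : 'I_n) a (M : 'M[R]_n) k l :
  (transvection i j a *m M) k l = M k l + (if k == i then a * M j l else 0).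
Proof.
rewrite /transvection mulmxDl mul1mx mxE; congr (_ + _).
rewrite mxE (bigD1 j) //= big1 ?addr0.
  rewrite !mxE eqxx andbT; case: (k == i); by rewrite ?mulr1 ?mulr0 ?mul0r.
by move=> m /negbTE mj; rewrite !mxE mj andbF mulr0 mul0r.
Qed.

Definition addrow (R : unitRingType) n (M : 'M[R]_n) i j a : 'M[R]_n :=
  \matrix_(k, l) (if k == i then M k l + a * M j l else M k l).

Definition req (R : unitRingType) n (M M' : 'M[R]_n) :=
  exists E, elementary_mx E /\ M = E *m M'.

Lemma req_refl (R : unitRingType) n (M : 'M[R]_n) : req M M.
Proof. by exists 1%:M; split; [constructor | rewrite mul1mx]. Qed.

Lemma req_trans (R : unitRingType) n (M1 M2 M3 : 'M[R]_n) :
  req M1 M2 -> req M2 M3 -> req M1 M3.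
Proof.
move=> [E1 [h1 ->]] [E2 [h2 ->]]; exists (E1 *m E2); split.
  exact: elem_mul. by rewrite mulmxA.
Qed.

Lemma req_addrow (R : unitRingType) n (M : 'M[R]_n) i j a :
  i != j -> req M (addrow M i j a).
Proof.
move=> ij; exists (transvection i j (- a)); split.
  by rewrite -[transvection _ _ _]mul1mx; apply: elemM => //; constructor.
apply/matrixP => k l; have ji : (j == i) = false by rewrite eq_sym (negbTE ij).
rewrite transvE !mxE ji.
case: (k == i); last by rewrite addr0.
by rewrite mulNr addrK.
Qed.

Definition addrows (R : unitRingType) n (M : 'M[R]_n) j (a : 'I_n -> R) : 'M[R]_n :=
  \matrix_(k, l) (if k == j then M k l else M k l + a k * M j l).

Lemma req_addrows (R : unitRingType) n (M : 'M[R]_n) j a : req M (addrows M j a).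
Proof.
pose P m := \matrix_(k, l) (if (k == j) || (m <= k)%N then M k l
                             else M k l + a k * M j l).
suff H : forall m, req M (P m).
  have := H n; congr (req _ _); apply/matrixP => k l; rewrite !mxE.
  by rewrite leqNgt ltn_ord orbF.
elim=> [|m IH].
  have -> : P 0%N = M by apply/matrixP => k l; rewrite !mxE leq0n orbT.
  exact: req_refl.
case: (ltnP m n) => hm; last first.
  have <- : P m = P m.+1; last by [].
  apply/matrixP => k l; rewrite !mxE.
  by rewrite [(m <= k)%N]leqNgt [(m.+1 <= k)%N]leqNgt (leq_trans (ltn_ord k) hm) (leq_trans (ltn_ord k) (leqW hm)).
set k0 := Ordinal hm.
case: (eqVneq k0 j) => hk0.
  have <- : P m = P m.+1; last by [].
  apply/matrixP => k l; rewrite !mxE leq_eqVlt.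
  case: (eqVneq k j) => //= kj.
  case: (eqVneq (val k) m) => //= km.
  by case/eqP: kj; rewrite -hk0; apply: val_inj.
apply: (req_trans IH).
have -> : P m.+1 = addrow (P m) k0 j (a k0); last exact: req_addrow.
apply/matrixP => k l; rewrite !mxE eqxx orTb.
case: (eqVneq k k0) => [->|kk0].
  by rewrite (negbTE hk0) /= leqnn ltnn.
rewrite [(m <= k)%N]leq_eqVlt.
have -> : (m == k) = false.
  apply/negbTE; apply: contra kk0 => /eqP mk; apply/eqP/val_inj; by rewrite /= mk.
by [].
Qed.

Lemma addrowE (R : unitRingType) n (M : 'M[R]_n) i j a k l :
  addrow M i j a k l = if k == i then M k l + a * M j l else M k l.
Proof. by rewrite mxE. Qed.

Lemma addrowsE (R : unitRingType) n (M : 'M[R]_n) j a k l :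
  addrows M j a k l = if k == j then M k l else M k l + a k * M j l.
Proof. by rewrite mxE. Qed.


Lemma comm_sub_unit (R : unitRingType) (x : R) : comm_sub x -> x \is a GRing.unit.
Proof.
elim=> [|a b y ua ub _ uy]; first exact: unitr1.
by rewrite !unitrMr ?unitrV.
Qed.

Lemma comm_subMM (R : unitRingType) (x y : R) :
  comm_sub x -> comm_sub y -> comm_sub (x * y).
Proof.
move=> hx; elim=> [|a b y' ua ub _ IH]; first by rewrite mulr1.
by rewrite mulrA; apply: comm_subM.
Qed.

Lemma comm_sub_comm (R : unitRingType) (a b : R) :
  a \is a GRing.unit -> b \is a GRing.unit -> comm_sub (a * b * a^-1 * b^-1).
Proof. by move=> ua ub; rewrite -[_ * b^-1]mul1r; apply: comm_subM => //; constructor. Qed.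

Lemma comm_sub_conj (R : unitRingType) (g x : R) :
  g \is a GRing.unit -> comm_sub x -> comm_sub (g * x * g^-1).
Proof.
move=> ug; elim=> [|a b y ua ub _ IH]; first by rewrite mulr1 mulrV //; constructor.
have -> : g * (y * (a * b * a^-1 * b^-1)) * g^-1 =
  (g * y * g^-1) * (((g * a) * b * (g * a)^-1 * b^-1) * (b * g * b^-1 * g^-1)).
  by rewrite invrM // -!mulrA !mulKr.
apply: comm_subMM => //; apply: comm_subMM; apply: comm_sub_comm => //.
by rewrite unitrMr.
Qed.

Lemma comm_sub_inv (R : unitRingType) (x : R) : comm_sub x -> comm_sub x^-1.
Proof.
elim=> [|a b y ua ub hy IH]; first by rewrite invr1; constructor.
have uy := comm_sub_unit hy.
have -> : (y * (a * b * a^-1 * b^-1))^-1 = y^-1 * (y * (b * a * b^-1 * a^-1) * y^-1).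
  rewrite !invrM ?unitrMr ?unitrV ?unitrMl // ?unitrMr ?unitrV //.
  by rewrite !invrK -!mulrA mulKr.
by apply: comm_subMM => //; apply: comm_sub_conj => //; apply: comm_sub_comm.
Qed.

Definition abq (R : unitRingType) (x y : R) := comm_sub (x * y^-1).

Lemma abq_refl (R : unitRingType) (x : R) : x \is a GRing.unit -> abq x x.
Proof. by move=> ux; rewrite /abq mulrV //; constructor. Qed.

Lemma abq_sym (R : unitRingType) (x y : R) :
  x \is a GRing.unit -> y \is a GRing.unit -> abq x y -> abq y x.
Proof. by move=> ux uy /comm_sub_inv; rewrite /abq invrM ?unitrV // invrK. Qed.

Lemma abq_trans (R : unitRingType) (x y z : R) : y \is a GRing.unit ->
  abq x y -> abq y z -> abq x z.
Proof. by move=> uy h1 h2; have := comm_subMM h1 h2; rewrite /abq -mulrA mulKr. Qed.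

Lemma abq_mulr (R : unitRingType) (x y z : R) : y \is a GRing.unit -> z \is a GRing.unit ->
  abq x y -> abq (x * z) (y * z).
Proof. by move=> uy uz; rewrite /abq invrM // -mulrA (mulrA z) mulrV // mul1r. Qed.

Lemma abq_mull (R : unitRingType) (x y z : R) : y \is a GRing.unit -> z \is a GRing.unit ->
  abq x y -> abq (z * x) (z * y).
Proof.
move=> uy uz /(comm_sub_conj uz); rewrite /abq invrM // !mulrA; exact.
Qed.

Lemma abq_comm (R : unitRingType) (x y : R) : x \is a GRing.unit -> y \is a GRing.unit ->
  abq (x * y) (y * x).
Proof. by move=> ux uy; rewrite /abq invrM // !mulrA; apply: comm_sub_comm. Qed.


Lemma liftF1 n (x : 'I_n) : (lift ord0 x == ord0) = false.
Proof. by rewrite eq_sym (negbTE (neq_lift _ _)). Qed.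
Lemma liftF2 n (x : 'I_n) : (ord0 == lift ord0 x) = false.
Proof. by rewrite (negbTE (neq_lift _ _)). Qed.

Definition ext (R : unitRingType) n (g : R) (A : 'M[R]_n) : 'M[R]_n.+1 :=
  \matrix_(k, l) match unlift ord0 k, unlift ord0 l with
                 | Some k', Some l' => A k' l'
                 | None, None => g
                 | _, _ => 0 end.

Lemma ext00 (R : unitRingType) n (g : R) (A : 'M[R]_n) : ext g A ord0 ord0 = g.
Proof. by rewrite mxE unlift_none. Qed.
Lemma ext0l (R : unitRingType) n (g : R) (A : 'M[R]_n) j : ext g A ord0 (lift ord0 j) = 0.
Proof. by rewrite mxE unlift_none liftK. Qed.
Lemma extl0 (R : unitRingType) n (g : R) (A : 'M[R]_n) j : ext g A (lift ord0 j) ord0 = 0.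
Proof. by rewrite mxE unlift_none liftK. Qed.
Lemma extll (R : unitRingType) n (g : R) (A : 'M[R]_n) i j :
  ext g A (lift ord0 i) (lift ord0 j) = A i j.
Proof. by rewrite mxE !liftK. Qed.

Lemma ext_mul (R : unitRingType) n (g h : R) (A B : 'M[R]_n) :
  ext g A *m ext h B = ext (g * h) (A *m B).
Proof.
apply/matrixP => k l; rewrite mxE big_ord_recl.
case: (unliftP ord0 k) => [k'|] ->; case: (unliftP ord0 l) => [l'|] ->;
  rewrite ?ext00 ?ext0l ?extl0 ?extll ?mxE.
- rewrite mul0r add0r; apply: eq_bigr => i _; by rewrite !extll.
- rewrite mul0r add0r big1 // => i _; by rewrite extl0 mulr0.
- rewrite mulr0 add0r big1 // => i _; by rewrite ext0l mul0r.
- rewrite big1 ?addr0 // => i _; by rewrite ext0l mul0r.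
Qed.

Lemma ext1 (R : unitRingType) n : ext 1 (1%:M : 'M[R]_n) = 1%:M.
Proof.
apply/matrixP => k l.
case: (unliftP ord0 k) => [k'|] ->; case: (unliftP ord0 l) => [l'|] ->;
  rewrite ?ext00 ?ext0l ?extl0 ?extll !mxE ?eqxx //.
all: try by rewrite (inj_eq (@lift_inj _ ord0)).
all: try by rewrite eq_sym (negbTE (neq_lift _ _)).
all: try by rewrite (negbTE (neq_lift _ _)).
Qed.

Lemma ext_transv (R : unitRingType) n (i j : 'I_n) (a : R) :
  ext 1 (transvection i j a) = transvection (lift ord0 i) (lift ord0 j) a.
Proof.
apply/matrixP => k l.
case: (unliftP ord0 k) => [k'|] ->; case: (unliftP ord0 l) => [l'|] ->;
  rewrite ?ext00 ?ext0l ?extl0 ?extll !mxE ?eqxx ?(inj_eq (@lift_inj _ ord0)) //.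
all: by rewrite ?liftF1 ?liftF2 /= ?andbF ?mulr0 ?addr0.
Qed.

Lemma ext_elem (R : unitRingType) n (E : 'M[R]_n) :
  elementary_mx E -> elementary_mx (ext 1 E).
Proof.
elim=> [|F i j a ij _ IH]; first by rewrite ext1; constructor.
rewrite -[1 : R]mulr1 -ext_mul ext_transv; apply: elemM => //.
Qed.


Definition D2 (R : unitRingType) n (g h : R) : 'M[R]_n.+2 :=
  \matrix_(k, l) (if k == l then (if k == ord0 then g else if k == ord_max then h else 1) else 0).

Lemma D2_req (R : unitRingType) n (g h : R) : g \is a GRing.unit -> h \is a GRing.unit ->
  req (D2 n g h) (diag_last n.+2 (g * h)).
Proof.
move=> ug uh.
have pq : (ord0 : 'I_n.+2) != ord_max by [].
have qp : (ord_max : 'I_n.+2) != ord0 by [].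
set p : 'I_n.+2 := ord0 in pq qp *; set q : 'I_n.+2 := ord_max in pq qp *.
set M1 := addrow (D2 n g h) q p g^-1.
set M2 := addrow M1 p q (1 - g).
set M3 := addrow M2 q p (-1).
set M4 := addrow M3 p q (- ((1 - g) * g^-1)).
apply: (req_trans (req_addrow _ g^-1 qp)); rewrite -/M1.
apply: (req_trans (req_addrow _ (1 - g) pq)); rewrite -/M2.
apply: (req_trans (req_addrow _ (-1) qp)); rewrite -/M3.
apply: (req_trans (req_addrow _ (- ((1 - g) * g^-1)) pq)); rewrite -/M4.
have -> : M4 = diag_last n.+2 (g * h); last exact: req_refl.
apply/matrixP => k l; rewrite /M4 /M3 /M2 /M1 !mxE.
have qpF : (q == p) = false by apply/negbTE.
have pqF : (p == q) = false by apply/negbTE.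
have hq : forall k : 'I_n.+2, ((k : nat) == n.+2.-1) = (k == q) by [].
rewrite !hq /p /q; clear M1 M2 M3 M4 hq; move: pq qp qpF pqF; rewrite /p /q; clear p q.
move=> pq qp qpF pqF.
case: (boolP (k == ord0)) => [/eqP->|kp]; [ | case: (boolP (k == ord_max)) => [/eqP->|kq]];
(case: (boolP (l == ord0)) => [/eqP->|lp]; [ | case: (boolP (l == ord_max)) => [/eqP->|lq]]).
all: rewrite ?[ord0 == l]eq_sym ?[ord_max == l]eq_sym.
all: rewrite ?eqxx ?qpF ?pqF ?(negbTE kp) ?(negbTE kq) ?(negbTE lp) ?(negbTE lq) //=.
all: rewrite ?mulVr // ?mulr0 ?add0r ?addr0 ?mulr1 ?mulN1r.
all: have gB : g + (1 - g) = 1 by rewrite addrC subrK.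
all: have hB : h - (1 - g) * h = g * h by rewrite mulrBl mul1r opprB addrC subrK.
all: rewrite ?gB ?hB ?subrr ?mulr0 ?addr0 ?oppr0 ?mulr0 ?addr0 //.
by rewrite mulNr -mulrA (mulrA g^-1) mulVr // mul1r subrr.
Qed.


Lemma rowrel (R : unitRingType) n (c : 'I_n.+3 -> 'I_n.+3 -> R) : is_frieze c ->
  let v1 := lift ord0 (ord0 : 'I_n.+2) in let L := (ord_max : 'I_n.+3) in
  let al := c ord0 v1 * (c L v1)^-1 in let be := c ord0 L * (c v1 L)^-1 in
  let w := c ord0 v1 * (c L v1)^-1 * c L ord0 in
  forall l, frieze_mx c ord0 l + - al * frieze_mx c L l + - be * frieze_mx c v1 l
            = if l == ord0 then - (w *+ 2) else 0.
Proof.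
case=> hU hT hX v1 L al be w l.
have v10 : v1 != ord0 by [].
have L0 : L != ord0 by [].
have v1L : v1 != L by [].
have Lv1 : L != v1 by [].
have uL1 := hU _ _ Lv1.
have u1L := hU _ _ v1L.
rewrite !mxE.
case: (boolP (l == ord0)) => [/eqP->|lp].
  rewrite (negbTE v10) (negbTE L0) add0r !mulNr.
  have -> : be * c v1 ord0 = w.
    by rewrite /be /w (hT ord0 v1 L) // eq_sym.
  by rewrite /w /al -opprD mulr2n.
rewrite eq_sym (negbTE lp).
case: (boolP (l == v1)) => [/eqP->|l1].
  rewrite (negbTE Lv1) eqxx mulr0 addr0 mulNr /al divrK // subrr //.
case: (boolP (l == L)) => [/eqP->|lL].
  rewrite eqxx (negbTE v1L) mulr0 addr0 mulNr /be divrK // subrr //.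
rewrite eq_sym (negbTE lL) eq_sym (negbTE l1).
rewrite (hX ord0 l v1 L); last first.
  apply/orP; left; apply/andP; split; apply/orP; left; apply/andP; split.
  - by [].
  - change (1 < l)%N.
    have : (l : nat) != 1%N by [].
    have : (l : nat) != 0%N by [].
    lia.
  - change (0 < l)%N.
    have : (l : nat) != 0%N by [].
    lia.
  - change (l < n.+2)%N.
    have : (l : nat) != n.+2 by [].
    have := ltn_ord l.
    lia.
by rewrite /al /be !mulNr addrAC addrK subrr.
Qed.

Definition restr (R : unitRingType) n (c : 'I_n.+1 -> 'I_n.+1 -> R) : 'I_n -> 'I_n -> R :=
  fun i j => c (lift ord0 i) (lift ord0 j).

Lemma frieze_restr (R : unitRingType) n (c : 'I_n.+1 -> 'I_n.+1 -> R) :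
  is_frieze c -> is_frieze (restr c).
Proof.
case=> hU hT hX; split.
- by move=> i k ik; apply: hU; rewrite (inj_eq (@lift_inj _ ord0)).
- by move=> i j k ij jk ik; apply: hT; rewrite (inj_eq (@lift_inj _ ord0)).
- move=> i k j l cr; apply: hX; move: cr.
  by rewrite /crossing /cyc4 /cyc3 !lift0 !ltnS.
Qed.

Lemma step (R : unitRingType) n (c : 'I_n.+3 -> 'I_n.+3 -> R) : is_frieze c ->
  (2%:R : R) \is a GRing.unit ->
  let v1 := lift ord0 (ord0 : 'I_n.+2) in let L := (ord_max : 'I_n.+3) in
  let w := c ord0 v1 * (c L v1)^-1 * c L ord0 in
  req (frieze_mx c) (ext (- (w *+ 2)) (frieze_mx (restr c))).
Proof.
move=> hc u2 v1 L w.
have hrow := rowrel hc.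
case: hc => hU hT hX.
have v10 : v1 != ord0 by [].
have L0 : L != ord0 by [].
have v1L : v1 != L by [].
have Lv1 : L != v1 by [].
have uw : w \is a GRing.unit.
  by rewrite /w !unitrMr ?unitrV; apply: hU.
have uw2 : w *+ 2 \is a GRing.unit by rewrite -mulr_natr unitrMr.
set al := c ord0 v1 * (c L v1)^-1.
set be := c ord0 L * (c v1 L)^-1.
have oL : (ord0 : 'I_n.+3) != L by [].
have o1 : (ord0 : 'I_n.+3) != v1 by [].
apply: (req_trans (req_addrow _ (- al) oL)).
apply: (req_trans (req_addrow _ (- be) o1)).
apply: (req_trans (req_addrows _ ord0 (fun k => frieze_mx c k ord0 * (w *+ 2)^-1))).
set X := addrows _ _ _.
have -> : X = ext (- (w *+ 2)) (frieze_mx (restr c)); last exact: req_refl.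
apply/matrixP => k l; rewrite /X addrowsE !addrowE.
rewrite eqxx (negbTE v10).
case: (unliftP ord0 k) => [k'|] ->; rewrite ?liftF1 ?eqxx.
  case: (unliftP ord0 l) => [l'|] ->.
    by rewrite hrow liftF1 mulr0 addr0 extll !mxE (inj_eq (@lift_inj _ ord0)).
  by rewrite /al /be /L /v1 hrow eqxx extl0 -/w mulrN divrK // subrr.
by rewrite /al /be /L /v1 hrow; case: (unliftP ord0 l) => [l'|] ->; rewrite ?liftF1 ?eqxx ?ext00 ?ext0l.
Qed.


Lemma unitM (R : unitRingType) (x y : R) :
  x \is a GRing.unit -> y \is a GRing.unit -> x * y \is a GRing.unit.
Proof. by move=> ux uy; rewrite unitrMr. Qed.

Lemma abq_key (R : unitRingType) (p y z A u : R) :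
  p \is a GRing.unit -> y \is a GRing.unit -> z \is a GRing.unit ->
  A \is a GRing.unit -> u \is a GRing.unit ->
  abq u (A * y) -> abq (p * y^-1 * z * u) (p * (A * z)).
Proof.
move=> up uy uz uA uu h.
have uw : p * y^-1 * z \is a GRing.unit by rewrite !unitM ?unitrV.
apply: (@abq_trans _ _ (p * y^-1 * z * (A * y))).
- by rewrite unitM // unitM.
- by apply: abq_mull => //; apply: unitM.
rewrite -!mulrA; apply: abq_mull => //; first by rewrite unitM.
apply: (@abq_trans _ _ (z * A * y * y^-1)).
- by rewrite mulrK // unitM.
- rewrite (mulrA z A y); apply: abq_comm; first by rewrite unitrV.
  by rewrite !unitM.
rewrite mulrK //; apply: abq_comm => //.
Qed.

Lemma req_mull (R : unitRingType) n (F A B : 'M[R]_n) :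
  elementary_mx F -> req A B -> req (F *m A) B.
Proof.
move=> hF [E [hE ->]]; exists (F *m E); split; first exact: elem_mul.
by rewrite mulmxA.
Qed.

Lemma prod_unit (R : unitRingType) n (F : 'I_n -> R) :
  (forall i, F i \is a GRing.unit) -> \prod_(i < n) F i \is a GRing.unit.
Proof.
move=> h; apply: (big_ind (fun x => x \is a GRing.unit)) => //.
- exact: unitr1.
- by move=> x y ux uy; apply: unitM.
Qed.

Lemma ext_diag (R : unitRingType) n (g d : R) :
  ext g (diag_last n.+1 d) = D2 n g d.
Proof.
apply/matrixP => k l.
case: (unliftP ord0 k) => [k'|] ->; case: (unliftP ord0 l) => [l'|] ->;
  rewrite ?ext00 ?ext0l ?extl0 ?extll !mxE ?eqxx ?liftF1 ?liftF2 //.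
Qed.


Lemma ord_eq0 (h : (0 < 2)%N) : Ordinal h = (ord0 : 'I_2).
Proof. exact: val_inj. Qed.
Lemma ord_eq1 (h : (1 < 2)%N) : Ordinal h = (ord_max : 'I_2).
Proof. exact: val_inj. Qed.

Lemma base_case (R : unitRingType) (c : 'I_2 -> 'I_2 -> R) : is_frieze c ->
  exists E d u, [/\ elementary_mx E, frieze_mx c = E *m diag_last 2 d,
     d = - ((- 2%:R) ^+ 0) * u, u \is a GRing.unit &
     abq u (\prod_(i < 2) c i (ordS i))].
Proof.
case=> hU _ _.
have o1 : (ord0 : 'I_2) != ord_max by [].
have o1' : (ord_max : 'I_2) != ord0 by [].
have u01 := hU _ _ o1.
have u10 := hU _ _ o1'.
have h1 : req (frieze_mx c) (D2 0 (c ord_max ord0) (- c ord0 ord_max)).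
  apply: (req_trans (req_addrow _ 1 o1)).
  apply: (req_trans (req_addrow _ (-1) o1')).
  apply: (req_trans (req_addrow _ 1 o1)).
  set X := addrow _ _ _ _.
  have -> : X = D2 0 (c ord_max ord0) (- c ord0 ord_max); last exact: req_refl.
  apply/matrixP => k l; rewrite /X !addrowE !mxE.
  case: k => [[|[|k]] hk] //; case: l => [[|[|l]] hl] //=.
  all: rewrite ?ord_eq0 ?ord_eq1 ?mul1r ?mulN1r ?add0r ?addr0 ?mulr0 ?add0r ?addr0 ?subrr ?addr0 //.
have uh : - c ord0 ord_max \is a GRing.unit by rewrite unitrN.
have [E [hE hM]] := req_trans h1 (D2_req 0 u10 uh).
exists E, (c ord_max ord0 * - c ord0 ord_max), (c ord_max ord0 * c ord0 ord_max).
split => //.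
- by rewrite expr0 mulN1r mulrN.
- exact: unitM.
have -> : \prod_(i < 2) c i (ordS i) = c ord0 ord_max * c ord_max ord0.
  rewrite big_ord_recr big_ord_recr big_ord0 /= mul1r.
  by congr (c _ _ * c _ _); apply: val_inj.
exact: abq_comm.
Qed.

Lemma natL1 n (i : 'I_n.+1) : ((1 + i).+1 %% n.+3 = 1 + i.+1 %% n.+2)%N.
Proof. have := ltn_ord i; move: (nat_of_ord i) => j hj; rewrite !modn_small; lia. Qed.
Lemma natL2 n (i : 'I_n.+1) : (i : nat) = (i.+1 %% n.+2)%N -> False.
Proof. have := ltn_ord i; move: (nat_of_ord i) => j hj; rewrite modn_small; lia. Qed.

Lemma main_ind (R : unitRingType) (u2 : (2%:R : R) \is a GRing.unit) n :
  forall c : 'I_n.+2 -> 'I_n.+2 -> R, is_frieze c ->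
  exists E d u, [/\ elementary_mx E, frieze_mx c = E *m diag_last n.+2 d,
     d = - ((- 2%:R) ^+ n) * u, u \is a GRing.unit &
     abq u (\prod_(i < n.+2) c i (ordS i))].
Proof.
elim: n => [|n IH] c hc; first exact: base_case.
have [E' [d' [u' [hE' hM' hd' uu' hab']]]] := IH _ (frieze_restr hc).
move: (step hc u2) => /= hst.
set v1 := lift ord0 (ord0 : 'I_n.+2) in hst.
set L := (ord_max : 'I_n.+3) in hst.
set w := c ord0 v1 * (c L v1)^-1 * c L ord0 in hst.
case: hc => hU hT hX.
have v10 : v1 != ord0 by [].
have L0 : L != ord0 by [].
have v1L : v1 != L by [].
have Lv1 : L != v1 by [].
have oL : (ord0 : 'I_n.+3) != L by [].
have o1 : (ord0 : 'I_n.+3) != v1 by [].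
have uw : w \is a GRing.unit.
  by rewrite /w !unitM ?unitrV //; apply: hU.
have uw2 : - (w *+ 2) \is a GRing.unit by rewrite unitrN -mulr_natr unitM.
have ud' : d' \is a GRing.unit.
  rewrite hd' unitM // unitrN unitrX // unitrN //.
rewrite hM' -[- (w *+ 2)]mul1r -ext_mul ext_diag in hst.
have [E2 [hE2 hD]] := D2_req n.+1 uw2 ud'.
have [E1 [hE1 hM1]] := hst.
exists (E1 *m ext 1 E' *m E2), (- (w *+ 2) * d'), (w * u'); split.
- by apply: elem_mul => //; apply: elem_mul => //; apply: ext_elem.
- by rewrite hM1 hD !mulmxA.
- rewrite hd' exprS !mulNr mulrN !opprK -mulr_natr.
  set s := (- 2%:R) ^+ n.
  have cm : GRing.comm w (2%:R * s).
    by apply: commrM; [apply: commr_nat | apply: commrX; apply: commrN; apply: commr_nat].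
  by rewrite mulrA -(mulrA w) cm !mulrA.
- exact: unitM.
set A := \prod_(i < n.+1) restr c (widen_ord (leqnSn _) i) (ordS (widen_ord (leqnSn _) i)).
have hQ' : \prod_(i < n.+2) restr c i (ordS i) = A * c L v1.
  rewrite big_ord_recr /= -/A; congr (_ * _).
  by rewrite /restr; congr (c _ _); apply: val_inj => //=; rewrite modnn.
have hQ : \prod_(i < n.+3) c i (ordS i) = c ord0 v1 * (A * c L ord0).
  rewrite big_ord_recl big_ord_recr /=; congr (c _ _ * (_ * c _ _)).
  - by apply: val_inj; rewrite /= modn_small.
  - apply: eq_bigr => i _; rewrite /restr; congr (c _ _); apply: val_inj.
    by rewrite /= /bump /=; apply: natL1.
  - exact: val_inj.
  - by apply: val_inj; rewrite /= modnn.
rewrite hQ' in hab'; rewrite hQ /w.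
have uA : A \is a GRing.unit.
  case: (frieze_restr (And3 hU hT hX)) => hU' _ _.
  apply: prod_unit => i; apply: hU'; apply/eqP => /(congr1 val) /=.
  exact: natL2.
apply: abq_key => //; try by apply: hU.
Qed.


Unset Implicit Arguments. Set Strict Implicit.

Theorem theoremA (R : unitRingType) (n : nat) (c : 'I_n -> 'I_n -> R) :
  skew_field R -> (3 <= n)%N -> is_frieze c ->
  dieudonne_det_is (frieze_mx c)
    (- ((- 2%:R) ^+ (n - 2)) * \prod_(i < n) c i (ordS i)).
Proof.
move=> hs; case: n c => [|[|[|k]]] c // _ hc.
have hk : (k.+3 - 2 = k.+1)%N by rewrite subSS subSS subn0.
rewrite hk.
case: (eqVneq (2%:R : R) 0) => [h2|h2]; last first.
  have u2 := hs _ h2.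
  have [E [d [u [hE hM hd uu hab]]]] := main_ind u2 hc.
  right; exists E, d; split => //.
  set s := - (- 2%:R) ^+ k.+1.
  have us : s \is a GRing.unit by rewrite unitrN unitrX // unitrN.
  have uQ : \prod_(i < k.+3) c i (ordS i) \is a GRing.unit.
    case: hc => hU _ _; apply: prod_unit => i; apply: hU.
    apply/eqP => /(congr1 val) /=.
    have hi := ltn_ord i.
    case: (ltnP i.+1 k.+3) => hi'; first by rewrite modn_small //; lia.
    have -> : i.+1 = k.+3 by lia.
    by rewrite modnn; lia.
  right; split.
  - by rewrite hd unitM.
  - by rewrite unitM.
  rewrite hd invrM // mulrA -(mulrA s).
  have cs : GRing.comm s (u * (\prod_(i < k.+3) c i (ordS i))^-1).
    by apply/commr_sym; apply: commrN; apply: commrX; apply: commrN; apply: commr_nat.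
  by rewrite cs mulrK.
left; split; last first.
  by rewrite h2 oppr0 expr0n /= oppr0 mul0r.
move=> [N [hMN _]].
have hrow := rowrel hc.
move: hrow => /=.
set v1 := lift ord0 (ord0 : 'I_k.+2).
set L := (ord_max : 'I_k.+3).
set al := c ord0 v1 * (c L v1)^-1.
set be := c ord0 L * (c v1 L)^-1.
move=> hrow.
have h0 : forall l, frieze_mx c ord0 l = al * frieze_mx c L l + be * frieze_mx c v1 l.
  move=> l; move: (hrow l); rewrite -mulr_natr h2 mulr0 oppr0 if_same.
  by rewrite -addrA => /eqP; rewrite addr_eq0 => /eqP ->; rewrite opprD !mulNr !opprK.
have := congr1 (fun A : 'M[R]_k.+3 => A ord0 ord0) hMN.
rewrite /= !mxE.
under eq_bigr => l _ do rewrite h0 mulrDl -!mulrA.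
rewrite big_split /= -!mulr_sumr.
have e1 : \sum_(i < k.+3) frieze_mx c L i * N i ord0 = 0.
  by have := congr1 (fun A : 'M[R]_k.+3 => A L ord0) hMN; rewrite /= !mxE.
have e2 : \sum_(i < k.+3) frieze_mx c v1 i * N i ord0 = 0.
  by have := congr1 (fun A : 'M[R]_k.+3 => A v1 ord0) hMN; rewrite /= !mxE.
rewrite e1 e2 !mulr0 addr0 => /esym /eqP; rewrite oner_eq0.
done.
Qed.
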